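(* Let $k\ge3$ be odd, let $G=(V,E)$ be a $k$-uniform power hypergraph, and let $\mathbf x\in\mathbb R^n$ be an H-eigenvector of its Laplacian tensor $\mathcal L$ corresponding to an H-eigenvalue $\lambda>1$. Let $e\in E$. (i) If $e$ has exactly one intersectional vertex $i$ and $x_s\neq0$ for some cored vertex $s\in e$, then $x_ix_s<0$. (ii) If $e$ has exactly two intersectional vertices $i$ and $j$ and $x_s\neq0$ for some cored vertex $s\in e$, then $x_ix_j<0$.
   Context: A $k$-uniform power hypergraph is the $k$-th power $H^k$ of a simple graph $H=(V_H,E_H)$: for each edge $e\in E_H$ add $k-2$ new distinct vertices $i_{e,1},\ldots,i_{e,k-2}$ (different for different edges and not in $V_H$), and take as edges the sets $e\cup\{i_{e,1},\ldots,i_{e,k-2}\}$, $e\in E_H$. For a $k$-uniform hypergraph with vertex set $[n]$, $d_i$ is the number of edges containing $i$; a vertex of degree one is a cored vertex and a vertex of degree larger than one is an intersectional vertex. The Laplacian tensor $\mathcal L=\mathcal D-\mathcal A$ ($\mathcal D$ diagonal with entries $d_i$, $\mathcal A$ with entries $\frac1{(k-1)!}$ at index tuples forming an edge and $0$ otherwise) satisfies $(\mathcal L\mathbf x^{k-1})_i=d_ix_i^{k-1}-\sum_{e\ni i}\prod_{s\in e\setminus\{i\}}x_s$. A real $\lambda$ is an H-eigenvalue with H-eigenvector $\mathbf x\neq0$ if $(\mathcal L\mathbf x^{k-1})_i=\lambda x_i^{k-1}$ for all $i$. *)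

(* Defs.v *)
From HB Require Import structures.
From mathcomp Require Import all_boot all_order all_algebra.
From mathcomp Require Import reals.
Set Implicit Arguments. Unset Strict Implicit. Unset Printing Implicit Defensive.
Import Order.TTheory GRing.Theory Num.Theory.
Local Open Scope ring_scope.

(* G = (['I_n], E) is (isomorphic to) the k-th power H^k of a simple graph
   H = (VH, EH): the vertices of H form a subset VH of 'I_n, the edges of H are
   2-subsets of VH, each edge g of H gets k-2 new vertices [ext g] (not in VH,
   pairwise disjoint for distinct edges), every vertex of G is either in VH or
   one of the added vertices, and the edges of G are exactly g :|: ext g. *)
Definition is_power_hypergraph (n k : nat) (E : {set {set 'I_n}}) : Prop :=
  exists (VH : {set 'I_n}) (EH : {set {set 'I_n}}) (ext : {set 'I_n} -> {set 'I_n}),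
    [/\ (forall g, g \in EH -> #|g| = 2%N /\ g \subset VH),
        (forall g, g \in EH -> #|ext g| = (k - 2)%N /\ [disjoint ext g & VH]),
        (forall g g', g \in EH -> g' \in EH -> g != g' -> [disjoint ext g & ext g']),
        (forall v : 'I_n, v \in VH \/ exists2 g, g \in EH & v \in ext g) &
        E = [set g :|: ext g | g in EH]].

Definition deg (n : nat) (E : {set {set 'I_n}}) (i : 'I_n) : nat :=
  #|[set e in E | i \in e]|.

Definition cored (n : nat) (E : {set {set 'I_n}}) (i : 'I_n) : bool := deg E i == 1%N.
Definition intersectional (n : nat) (E : {set {set 'I_n}}) (i : 'I_n) : bool :=
  (1 < deg E i)%N.

(* (L x^{k-1})_i = d_i x_i^{k-1} - sum_{e ∋ i} prod_{s in e \ {i}} x_s *)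
Definition lap_apply (R : realType) (n k : nat) (E : {set {set 'I_n}})
    (x : 'I_n -> R) (i : 'I_n) : R :=
  (deg E i)%:R * x i ^+ (k - 1)
  - \sum_(e in E | i \in e) \prod_(s in e :\ i) x s.

Definition is_H_eigenpair (R : realType) (n k : nat) (E : {set {set 'I_n}})
    (lambda : R) (x : 'I_n -> R) : Prop :=
  (exists i, x i != 0) /\
  forall i, lap_apply k E x i = lambda * x i ^+ (k - 1).

(* Main.v *)
Require Import Defs.
From HB Require Import structures.
From mathcomp Require Import all_boot all_order all_algebra.
From mathcomp Require Import reals.
From mathcomp Require Import zify ring lra.
Import Order.TTheory GRing.Theory Num.Theory.
Local Open Scope ring_scope.

Lemma odd_pow_inj (R : realDomainType) (k : nat) (x y : R) :
  odd k -> x ^+ k = y ^+ k -> x = y.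
Proof.
move=> ko e.
have k0 : (0 < k)%N by case: k ko e.
case: (lerP 0 x) => hx.
  have hy : 0 <= y by rewrite -(exprn_odd_ge0 _ ko) -e exprn_odd_ge0.
  by apply/eqP; rewrite -(eqrXn2 k0 hx hy) e.
have hy : y < 0 by rewrite -(exprn_odd_lt0 _ ko) -e exprn_odd_lt0.
have hx' : 0 <= - x by rewrite oppr_ge0; apply: ltW.
have hy' : 0 <= - y by rewrite oppr_ge0; apply: ltW.
apply/eqP.
rewrite -eqr_opp -(eqrXn2 k0 hx' hy').
by rewrite (exprNn x) (exprNn y) e.
Qed.

Theorem corollary4p1 (R : realType) (n k : nat) (E : {set {set 'I_n}})
    (lambda : R) (x : 'I_n -> R) :
  (3 <= k)%N -> odd k ->
  is_power_hypergraph k E ->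
  is_H_eigenpair k E lambda x ->
  1 < lambda ->
  forall e, e \in E ->
  (forall i s : 'I_n,
     [set v in e | intersectional E v] = [set i] ->
     s \in e -> cored E s -> x s != 0 ->
     x i * x s < 0) /\
  (forall i j s : 'I_n,
     i != j ->
     [set v in e | intersectional E v] = [set i; j] ->
     s \in e -> cored E s -> x s != 0 ->
     x i * x j < 0).
Proof.
move=> k3 ko Hpow [_ Heig] lgt1 e eE.
have ce : #|e| = k.
  case: Hpow => VH [EH [ext [h1 h2 h3 h4 hE]]].
  move: eE; rewrite hE => /imsetP [g gEH ->].
  have [g2 gV] := h1 g gEH; have [ek dV] := h2 g gEH.
  have dj : [disjoint g & ext g].
    by rewrite disjoint_sym; apply: (disjointWr gV).
  rewrite cardsU g2 ek.
  move: dj; rewrite -setI_eq0 => /eqP ->; rewrite cards0; lia.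
have degpos : forall t, t \in e -> (0 < deg E t)%N.
  move=> t te; apply/card_gt0P; exists e; by rewrite inE eE te.
have ncored : forall t, t \in e -> ~~ intersectional E t -> cored E t.
  move=> t te; rewrite /intersectional /cored; have := degpos t te; lia.
have keyA : forall s, s \in e -> cored E s ->
    \prod_(t in e :\ s) x t = (1 - lambda) * x s ^+ (k - 1).
  move=> s se cs.
  have Hset : [set e' in E | s \in e'] = [set e].
    move: cs; rewrite /cored /deg => /cards1P [a Ha].
    have : e \in [set e' in E | s \in e'] by rewrite inE eE se.
    by rewrite Ha inE => /eqP <-.
  have := Heig s; rewrite /lap_apply (eqP cs).
  have -> : \sum_(e' in E | s \in e') \prod_(s0 in e' :\ s) x s0
         = \sum_(e' in [set e]) \prod_(s0 in e' :\ s) x s0.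
    by apply: eq_bigl => e'; rewrite -Hset inE.
  rewrite big_set1 mul1r => H.
  by rewrite mulrBl mul1r -H opprB addrC subrK.
have hl : 1 - lambda != 0 by rewrite subr_eq0 eq_sym gt_eqF.
have keyB : forall s t, s \in e -> cored E s -> x s != 0 -> t \in e -> cored E t ->
    x t = x s.
  move=> s t se cs xs0 te ct.
  have P1 : \prod_(u in e) x u = x s * \prod_(u in e :\ s) x u by rewrite (big_setD1 s se).
  have P2 : \prod_(u in e) x u = x t * \prod_(u in e :\ t) x u by rewrite (big_setD1 t te).
  rewrite keyA // in P1; rewrite keyA // in P2.
  apply: (@odd_pow_inj _ k _ _ ko).
  apply: (mulfI hl).
  have k1 : k = (k - 1).+1 by clear -k3; lia.
  rewrite k1 !exprSr.
  rewrite (_ : (1 - lambda) * (x t ^+ (k-1) * x t) = \prod_(u in e) x u); last by rewrite P2; ring.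
  by rewrite P1; ring.
split.
  move=> i s Hset se cs xs0.
  have : i \in [set v in e | intersectional E v] by rewrite Hset set11.
  rewrite inE => /andP [ie ii].
  have si : s != i.
    by apply: contraTneq ii => <-; rewrite /intersectional (eqP cs).
  have is_ : i \in e :\ s by rewrite !inE (eq_sym i s) si ie.
  have cst : forall t, t \in e :\ s :\ i -> x t = x s.
    move=> t; rewrite !inE => /and3P [ti ts te].
    apply: keyB => //; apply: ncored => //.
    apply: contra ti => it.
    have : t \in [set v in e | intersectional E v] by rewrite inE te it.
    by rewrite Hset inE.
  have Pc : \prod_(t in e :\ s :\ i) x t = x s ^+ (k-2).
    rewrite (eq_bigr (fun _ => x s)); last by move=> t /cst.
    rewrite prodr_const; congr (_ ^+ _).
    move: (cardsD1 s e) (cardsD1 i (e :\ s)); rewrite se is_ ce /= => -> ->; rewrite !add1n !subSS subn0 //.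
  have := keyA s se cs; rewrite (big_setD1 i is_) /= Pc.
  have k1 : (k - 1 = (k - 2).+1)%N by clear -k3; lia.
  rewrite k1 exprS mulrA => /(mulIf (expf_neq0 _ xs0)) ->.
  have hc : 0 < x s ^+ 2 by rewrite exprn_even_gt0 // xs0 orbT.
  by rewrite expr2 in hc; rewrite -mulrA pmulr_llt0 // subr_lt0.
move=> i j s ij Hset se cs xs0.
have : i \in [set v in e | intersectional E v] by rewrite Hset set21.
rewrite inE => /andP [ie ii].
have : j \in [set v in e | intersectional E v] by rewrite Hset set22.
rewrite inE => /andP [je jj].
have si : s != i.
  by apply: contraTneq ii => <-; rewrite /intersectional (eqP cs).
have sj : s != j.
  by apply: contraTneq jj => <-; rewrite /intersectional (eqP cs).
have is_ : i \in e :\ s by rewrite !inE (eq_sym i s) si ie.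
have js : j \in e :\ s :\ i by rewrite !inE (eq_sym j i) ij (eq_sym j s) sj je.
have cst : forall t, t \in e :\ s :\ i :\ j -> x t = x s.
  move=> t; rewrite !inE => /and4P [tj ti ts te].
  apply: keyB => //; apply: ncored => //.
  apply: contra ti => it.
  have : t \in [set v in e | intersectional E v] by rewrite inE te it.
  by rewrite Hset !inE (negPf tj) orbF.
have Pc : \prod_(t in e :\ s :\ i :\ j) x t = x s ^+ (k-3).
  rewrite (eq_bigr (fun _ => x s)); last by move=> t /cst.
  rewrite prodr_const; congr (_ ^+ _).
  move: (cardsD1 s e) (cardsD1 i (e :\ s)) (cardsD1 j (e :\ s :\ i)).
  rewrite se is_ js ce /= => -> -> ->; rewrite !add1n !subSS subn0 //.
have := keyA s se cs; rewrite (big_setD1 i is_) (big_setD1 j js) /= Pc.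
have k1 : (k - 1 = (k - 3).+2)%N by clear -k3; lia.
rewrite k1 (exprS (x s) (k-3).+1) (exprS (x s) (k-3)) !mulrA => /(mulIf (expf_neq0 _ xs0)) ->.
have hc : 0 < x s ^+ 2 by rewrite exprn_even_gt0 // xs0 orbT.
by rewrite expr2 in hc; rewrite -mulrA pmulr_llt0 // subr_lt0.
Qed.
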